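(* Let $U$ be a connected coordinate domain with coordinates $(x^1,x^2)$ carrying a connection $\nabla$ whose Christoffel symbols satisfy $\Gamma_{ij}{}^k=\Gamma_{ij}{}^k(x^1)$, $\Gamma_{11}{}^1=0$, $\Gamma_{11}{}^2=0$ (so that $\partial_{x^2}$ is an affine Killing vector field). Let $\mathfrak{K}_{\mathbb{C}}$ denote the complex affine Killing vector fields on $U$ (complex-coefficient vector fields satisfying the affine Killing equations), $\mathfrak{K}$ the real ones, and for $\alpha\in\mathbb{C}$ set $\mathfrak{K}_\alpha:=\{X=e^{\alpha x^2}v(x^1)\partial_{x^2}:X\in\mathfrak{K}_{\mathbb{C}}\}$. (1) If there exists $X\in\mathfrak{K}_\alpha$ which is not a constant multiple of $\partial_{x^2}$, then $$\Gamma_{11}{}^1=0,\ \Gamma_{11}{}^2=0,\ \Gamma_{12}{}^1=0,\ \Gamma_{21}{}^1=0,\ \Gamma_{22}{}^1=0,\ \Gamma_{22}{}^2=-\alpha.\qquad(\ast)$$ (2) Suppose the Christoffel symbols satisfy $(\ast)$ for a given $\alpha$. Then: (a) if $u(x^1,x^2)\partial_{x^1}+w(x^1,x^2)\partial_{x^2}\in\mathfrak{K}_{\mathbb{C}}$, then (i) $\alpha\,\partial_{x^2}u+\partial_{x^2}^2u=0$ and (ii) $(\Gamma_{12}{}^2(x^1)+\Gamma_{21}{}^2(x^1))\partial_{x^1}w+\partial_{x^1}^2w=0$; (b) $\mathfrak{K}_\alpha=\{e^{\alpha x^2}v(x^1)\partial_{x^2}:(\Gamma_{12}{}^2(x^1)+\Gamma_{21}{}^2(x^1))v'(x^1)+v''(x^1)=0\}$;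 (c) if moreover $\alpha=0$ and $u(x^1,x^2)\partial_{x^1}+\{\sum_nw_n(x^1)(x^2)^n\}\partial_{x^2}\in\mathfrak{K}_{\mathbb{C}}$, then $w_n(x^1)\partial_{x^2}\in\mathfrak{K}_0$ for all $n$; furthermore $x^2\partial_{x^2}\in\mathfrak{K}$.
   Context: $\nabla_{\partial_{x^i}}\partial_{x^j}=\Gamma_{ij}{}^k\partial_{x^k}$ (torsion allowed). A vector field $X=a^k\partial_{x^k}$ (real or complex coefficients) is an affine Killing vector field iff for all $1\le i,j,k\le2$: $$0=\frac{\partial^2a^k}{\partial x^i\partial x^j}+\sum_\ell\Big\{a^\ell\frac{\partial\Gamma_{ij}{}^k}{\partial x^\ell}-\Gamma_{ij}{}^\ell\frac{\partial a^k}{\partial x^\ell}+\Gamma_{i\ell}{}^k\frac{\partial a^\ell}{\partial x^j}+\Gamma_{\ell j}{}^k\frac{\partial a^\ell}{\partial x^i}\Big\}.$$ *)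

(* Defs.v *)
From Stdlib Require Import Reals List.
From Coquelicot Require Import Coquelicot.

Open Scope R_scope.

Inductive idx := I1 | I2.

Definition Cderive (f : R -> C) (t : R) : C :=
  (Derive (fun s => fst (f s)) t, Derive (fun s => snd (f s)) t).

Definition ex_Cderive (f : R -> C) (t : R) : Prop :=
  ex_derive (fun s => fst (f s)) t /\ ex_derive (fun s => snd (f s)) t.

Definition partial (i : idx) (f : R * R -> C) (p : R * R) : C :=
  match i with
  | I1 => Cderive (fun t => f (t, snd p)) (fst p)
  | I2 => Cderive (fun t => f (fst p, t)) (snd p)
  end.

Definition ex_partial (i : idx) (f : R * R -> C) (p : R * R) : Prop :=
  match i with
  | I1 => ex_Cderive (fun t => f (t, snd p)) (fst p)
  | I2 => ex_Cderive (fun t => f (fst p, t)) (snd p)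
  end.

Fixpoint iter_partial (l : list idx) (f : R * R -> C) : R * R -> C :=
  match l with
  | nil => f
  | cons i l' => partial i (iter_partial l' f)
  end.

Definition smooth2 (U : R * R -> Prop) (f : R * R -> C) : Prop :=
  forall (l : list idx) (p : R * R), U p ->
    continuous (iter_partial l f) p /\
    (forall i, ex_partial i (iter_partial l f) p).

Definition smooth1 (I : R -> Prop) (g : R -> R) : Prop :=
  forall (n : nat) (x : R), I x -> ex_derive (Derive_n g n) x.

Definition smooth1C (I : R -> Prop) (v : R -> C) : Prop :=
  smooth1 I (fun t => fst (v t)) /\ smooth1 I (fun t => snd (v t)).

Definition connected2 (U : R * R -> Prop) : Prop :=
  forall A B : R * R -> Prop, open A -> open B ->
    (forall p, U p -> A p \/ B p) ->
    (forall p, U p -> A p -> B p -> False) ->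
    (forall p, U p -> A p) \/ (forall p, U p -> B p).

Definition proj1U (U : R * R -> Prop) (x : R) : Prop := exists y, U (x, y).

Definition Cexp (z : C) : C :=
  (exp (fst z) * cos (snd z), exp (fst z) * sin (snd z)).

(** Christoffel symbols Gam i j k = Gamma_{ij}^k, functions of x^1 only;
    as functions on R^2: *)
Definition GamC (Gam : idx -> idx -> idx -> R -> R) (i j k : idx)
  (p : R * R) : C := RtoC (Gam i j k (fst p)).

Definition sum_idx (F : idx -> C) : C := Cplus (F I1) (F I2).

Definition Killing_eq (Gam : idx -> idx -> idx -> R -> R)
  (a : idx -> R * R -> C) (p : R * R) (i j k : idx) : Prop :=
  Cplus (partial i (partial j (a k)) p)
    (sum_idx (fun l =>
       Cplus (Cplus (Cminus (Cmult (a l p) (partial l (GamC Gam i j k) p))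
                            (Cmult (GamC Gam i j l p) (partial l (a k) p)))
                    (Cmult (GamC Gam i l k p) (partial j (a l) p)))
             (Cmult (GamC Gam l j k p) (partial i (a l) p))))
  = RtoC 0.

Definition KC (U : R * R -> Prop) (Gam : idx -> idx -> idx -> R -> R)
  (a : idx -> R * R -> C) : Prop :=
  (forall k, smooth2 U (a k)) /\
  (forall p, U p -> forall i j k, Killing_eq Gam a p i j k).

Definition KR (U : R * R -> Prop) (Gam : idx -> idx -> idx -> R -> R)
  (a : idx -> R * R -> C) : Prop :=
  KC U Gam a /\ (forall k p, U p -> snd (a k p) = 0).

Definition K_alpha (U : R * R -> Prop) (Gam : idx -> idx -> idx -> R -> R)
  (alpha : C) (a : idx -> R * R -> C) : Prop :=
  KC U Gam a /\
  exists v : R -> C, forall p, U p ->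
    a I1 p = RtoC 0 /\
    a I2 p = Cmult (Cexp (Cmult alpha (RtoC (snd p)))) (v (fst p)).

Definition star (U : R * R -> Prop) (Gam : idx -> idx -> idx -> R -> R)
  (alpha : C) : Prop :=
  forall x, proj1U U x ->
    Gam I1 I1 I1 x = 0 /\ Gam I1 I1 I2 x = 0 /\ Gam I1 I2 I1 x = 0 /\
    Gam I2 I1 I1 x = 0 /\ Gam I2 I2 I1 x = 0 /\
    RtoC (Gam I2 I2 I2 x) = Copp alpha.

Definition vf (a1 a2 : R * R -> C) : idx -> R * R -> C :=
  fun k => match k with I1 => a1 | I2 => a2 end.

Fixpoint Csum (N : nat) (f : nat -> C) : C :=
  match N with
  | O => RtoC 0
  | S m => Cplus (Csum m f) (f m)
  end.

(* Main.v *)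
Require Import Defs.
From Stdlib Require Import Reals.
From Coquelicot Require Import Coquelicot.
From Stdlib Require Import Lra Lia.
Open Scope R_scope.

Lemma loc1 (U : R * R -> Prop) x y : open U -> U (x,y) -> locally x (fun t => U (t,y)).
Proof. intros HU H. destruct (HU _ H) as [e He]. exists e. intros t Ht. apply He. split; simpl; [exact Ht| apply ball_center]. Qed.
Lemma loc2 (U : R * R -> Prop) x y : open U -> U (x,y) -> locally y (fun t => U (x,t)).
Proof. intros HU H. destruct (HU _ H) as [e He]. exists e. intros t Ht. apply He. split; simpl; [apply ball_center|exact Ht]. Qed.

Lemma partial_ext U f g i p : open U -> (forall q, U q -> f q = g q) -> U p ->
  partial i f p = partial i g p.
Proof.
  intros HU Hfg Hp. destruct p as [x y]. destruct i; unfold partial, Cderive; simpl; f_equal;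
  apply Derive_ext_loc.
  1,2: generalize (loc1 U x y HU Hp).
  3,4: generalize (loc2 U x y HU Hp).
  all: apply filter_imp; intros t Ht; rewrite ?Hfg; auto.
Qed.

Lemma ex_partial_ext U f g i p : open U -> (forall q, U q -> f q = g q) -> U p ->
  ex_partial i f p -> ex_partial i g p.
Proof.
  intros HU Hfg Hp. destruct p as [x y]. destruct i; unfold ex_partial, ex_Cderive; simpl;
  intros [H1 H2]; split.
  - apply (ex_derive_ext_loc (fun s => fst (f (s,y)))); auto.
    generalize (loc1 U x y HU Hp); apply filter_imp; intros t Ht; rewrite Hfg; auto.
  - apply (ex_derive_ext_loc (fun s => snd (f (s,y)))); auto.
    generalize (loc1 U x y HU Hp); apply filter_imp; intros t Ht; rewrite Hfg; auto.
  - apply (ex_derive_ext_loc (fun s => fst (f (x,s)))); auto.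
    generalize (loc2 U x y HU Hp); apply filter_imp; intros t Ht; rewrite Hfg; auto.
  - apply (ex_derive_ext_loc (fun s => snd (f (x,s)))); auto.
    generalize (loc2 U x y HU Hp); apply filter_imp; intros t Ht; rewrite Hfg; auto.
Qed.

Definition vd (v : R -> C) (n : nat) (t : R) : C :=
  (Derive_n (fun s => fst (v s)) n t, Derive_n (fun s => snd (v s)) n t).

Definition Fm (al : C) (v : R -> C) (n k : nat) (p : R * R) : C :=
  Cmult (Cmult (Cpow al k) (Cexp (Cmult al (RtoC (snd p))))) (vd v n (fst p)).

Lemma Fm_d2 al v n k p : partial I2 (Fm al v n k) p = Fm al v n (S k) p.
Proof.
  destruct p as [x y]. unfold partial, Cderive, Fm, Cexp. rewrite Cpow_S.
  destruct al as [a b]. destruct (Cpow (a,b) k) as [c1 c2]. simpl.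
  unfold vd; simpl. set (w1 := Derive_n _ n x). set (w2 := Derive_n _ n x).
  unfold Cmult; simpl. f_equal; apply is_derive_unique; auto_derive; auto; unfold Rminus; ring.
Qed.

Lemma Fm_d1 al v n k p :
  ex_derive (Derive_n (fun s => fst (v s)) n) (fst p) ->
  ex_derive (Derive_n (fun s => snd (v s)) n) (fst p) ->
  partial I1 (Fm al v n k) p = Fm al v (S n) k p.
Proof.
  intros H1 H2.
  destruct p as [x y]. unfold partial, Cderive, Fm, Cexp, vd.
  destruct al as [a b]. destruct (Cpow (a,b) k) as [c1 c2]. simpl in *.
  set (w1 := Derive_n (fun s : R => fst (v s)) n) in *.
  set (w2 := Derive_n (fun s : R => snd (v s)) n) in *.
  unfold Cmult; simpl. f_equal; apply is_derive_unique; auto_derive; auto; unfold Rminus; try change (fun x0 : R => w1 x0) with w1; try change (fun x0 : R => w2 x0) with w2; ring.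
Qed.

Lemma cont_pair (F1 F2 : R * R -> R) p :
  continuous F1 p -> continuous F2 p -> @continuous _ C_UniformSpace (fun q => (F1 q, F2 q) : C) p.
Proof.
  intros H1 H2 P [eps He].
  assert (L1 := H1 (ball (F1 p) eps) (locally_ball _ _)).
  assert (L2 := H2 (ball (F2 p) eps) (locally_ball _ _)).
  unfold filtermap in *.
  generalize (filter_and _ _ L1 L2). apply filter_imp. intros q [Hq1 Hq2].
  apply He. split; assumption.
Qed.

Lemma cont_sep (g1 h1 g2 h2 : R -> R) p :
  continuous g1 (fst p) -> continuous h1 (snd p) ->
  continuous g2 (fst p) -> continuous h2 (snd p) ->
  continuous (fun q : R * R => g1 (fst q) * h1 (snd q) + g2 (fst q) * h2 (snd q)) p.
Proof.
  intros A1 B1 A2 B2. destruct p as [x y]. simpl in *.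
  apply (continuous_plus (K:=R_AbsRing) (V:=R_NormedModule)
    (fun q : R * R => g1 (fst q) * h1 (snd q)) (fun q : R * R => g2 (fst q) * h2 (snd q))).
  - apply (continuous_mult (K:=R_AbsRing) (fun q : R * R => g1 (fst q)) (fun q : R * R => h1 (snd q))).
    + apply (continuous_comp fst g1); [apply continuous_fst | exact A1].
    + apply (continuous_comp snd h1); [apply continuous_snd | exact B1].
  - apply (continuous_mult (K:=R_AbsRing) (fun q : R * R => g2 (fst q)) (fun q : R * R => h2 (snd q))).
    + apply (continuous_comp fst g2); [apply continuous_fst | exact A2].
    + apply (continuous_comp snd h2); [apply continuous_snd | exact B2].
Qed.

Lemma Fm_ex2 al v n k p : ex_partial I2 (Fm al v n k) p.
Proof.
  destruct p as [x y]. unfold ex_partial, ex_Cderive, Fm, Cexp, vd.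
  destruct al as [a b]. destruct (Cpow (a,b) k) as [c1 c2]. simpl.
  split; auto_derive; auto.
Qed.

Lemma Fm_ex1 al v n k p :
  ex_derive (Derive_n (fun s => fst (v s)) n) (fst p) ->
  ex_derive (Derive_n (fun s => snd (v s)) n) (fst p) ->
  ex_partial I1 (Fm al v n k) p.
Proof.
  intros H1 H2.
  destruct p as [x y]. unfold ex_partial, ex_Cderive, Fm, Cexp, vd.
  destruct al as [a b]. destruct (Cpow (a,b) k) as [c1 c2]. simpl in *.
  set (w1 := Derive_n (fun s : R => fst (v s)) n) in *.
  set (w2 := Derive_n (fun s : R => snd (v s)) n) in *.
  split; auto_derive; auto.
Qed.

Lemma Fm_cont al v n k p :
  continuous (Derive_n (fun s => fst (v s)) n) (fst p) ->
  continuous (Derive_n (fun s => snd (v s)) n) (fst p) ->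
  continuous (Fm al v n k) p.
Proof.
  intros H1 H2.
  set (w1 := Derive_n (fun s : R => fst (v s)) n) in *.
  set (w2 := Derive_n (fun s : R => snd (v s)) n) in *.
  set (E := fun s => Cmult (Cpow al k) (Cexp (Cmult al (RtoC s)))).
  assert (HE1 : forall s, continuous (fun s => fst (E s)) s).
  { intro s. apply (ex_derive_continuous (K:=R_AbsRing) (V:=R_NormedModule)). unfold E, Cexp.
    destruct al as [a b]. destruct (Cpow (a,b) k) as [c1 c2]. simpl. auto_derive; auto. }
  assert (HE2 : forall s, continuous (fun s => snd (E s)) s).
  { intro s. apply (ex_derive_continuous (K:=R_AbsRing) (V:=R_NormedModule)). unfold E, Cexp.
    destruct al as [a b]. destruct (Cpow (a,b) k) as [c1 c2]. simpl. auto_derive; auto. }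
  assert (HE3 : forall s, continuous (fun s => - snd (E s)) s).
  { intro s. apply (ex_derive_continuous (K:=R_AbsRing) (V:=R_NormedModule)). unfold E, Cexp.
    destruct al as [a b]. destruct (Cpow (a,b) k) as [c1 c2]. simpl. auto_derive; auto. }
  apply (continuous_ext (fun q => ((fun q : R * R => w1 (fst q) * fst (E (snd q)) + w2 (fst q) * (- snd (E (snd q)))) q,
                                   (fun q : R * R => w2 (fst q) * fst (E (snd q)) + w1 (fst q) * snd (E (snd q))) q) : C)).
  { intros [t s]. unfold Fm, vd, E. cbn [fst snd]. fold w1 w2. destruct (Cmult (Cpow al k) (Cexp (Cmult al (RtoC s)))) as [e1 e2].
    unfold Cmult. cbn [fst snd]. f_equal; ring. }
  apply cont_pair.
  - exact (cont_sep w1 (fun s => fst (E s)) w2 (fun s => - snd (E s)) p H1 (HE1 _) H2 (HE3 _)).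
  - exact (cont_sep w2 (fun s => fst (E s)) w1 (fun s => snd (E s)) p H2 (HE1 _) H1 (HE2 _)).
Qed.

Fixpoint cnt1 (l : list idx) : nat :=
  match l with nil => O | cons I1 l' => S (cnt1 l') | cons I2 l' => cnt1 l' end.
Fixpoint cnt2 (l : list idx) : nat :=
  match l with nil => O | cons I2 l' => S (cnt2 l') | cons I1 l' => cnt2 l' end.

Lemma sm_ex U v n p : smooth1C (proj1U U) v -> U p ->
  ex_derive (Derive_n (fun s => fst (v s)) n) (fst p) /\
  ex_derive (Derive_n (fun s => snd (v s)) n) (fst p).
Proof.
  intros [S1 S2] Hp. destruct p as [x y]. split; [apply S1|apply S2]; exists y; exact Hp.
Qed.

Lemma PF U al v f : open U -> smooth1C (proj1U U) v ->
  (forall q, U q -> f q = Fm al v 0 0 q) ->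
  forall l q, U q -> iter_partial l f q = Fm al v (cnt1 l) (cnt2 l) q.
Proof.
  intros HU Hv Hf l. induction l as [|i l IH]; intros q Hq; simpl; auto.
  rewrite (partial_ext U (iter_partial l f) (Fm al v (cnt1 l) (cnt2 l)) i q HU IH Hq).
  destruct i; simpl.
  - destruct (sm_ex U v (cnt1 l) q Hv Hq). apply Fm_d1; auto.
  - apply Fm_d2.
Qed.

Lemma PF_smooth U al v f : open U -> smooth1C (proj1U U) v ->
  (forall q, U q -> f q = Fm al v 0 0 q) -> smooth2 U f.
Proof.
  intros HU Hv Hf l p Hp. split.
  - apply (continuous_ext_loc _ (Fm al v (cnt1 l) (cnt2 l))).
    + generalize (HU p Hp). apply filter_imp. intros q Hq. symmetry. apply (PF U al v f HU Hv Hf l q Hq).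
    + destruct (sm_ex U v (cnt1 l) p Hv Hp) as [E1 E2].
      apply Fm_cont; apply (ex_derive_continuous (K:=R_AbsRing) (V:=R_NormedModule)); auto.
  - intro i. apply (ex_partial_ext U (Fm al v (cnt1 l) (cnt2 l))); auto.
    + intros q Hq. symmetry. apply (PF U al v f HU Hv Hf l q Hq).
    + destruct i.
      * destruct (sm_ex U v (cnt1 l) p Hv Hp). apply Fm_ex1; auto.
      * apply Fm_ex2.
Qed.

Lemma Cexp_nz z : Cexp z <> RtoC 0.
Proof.
  unfold Cexp, RtoC. intro H. injection H as H1 H2.
  assert (He : exp (fst z) > 0) by apply exp_pos.
  apply Rmult_integral in H1. apply Rmult_integral in H2.
  destruct H1 as [H1|H1]; [lra|]. destruct H2 as [H2|H2]; [lra|].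
  generalize (sin2_cos2 (snd z)). unfold Rsqr. rewrite H1, H2. lra.
Qed.

Lemma Cmult_cancel_r z w : Cmult z w = RtoC 0 -> w <> RtoC 0 -> z = RtoC 0.
Proof.
  intros H Hw. replace z with (Cmult (Cmult z w) (Cinv w)).
  - rewrite H. ring.
  - field. exact Hw.
Qed.

Lemma RtoC_inj0 r : RtoC r = RtoC 0 -> r = 0.
Proof. unfold RtoC. intro H. injection H. auto. Qed.

Lemma Fm00 al v p : Fm al v 0 0 p = Cmult (Cexp (Cmult al (RtoC (snd p)))) (v (fst p)).
Proof.
  unfold Fm, vd. simpl Derive_n. destruct (v (fst p)) as [v1 v2]. cbn [fst snd Cpow]. ring.
Qed.

Lemma Z_iter U f : open U -> (forall q, U q -> f q = RtoC 0) ->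
  forall l q, U q -> iter_partial l f q = RtoC 0.
Proof.
  intros HU Hf l. induction l as [|i l IH]; intros q Hq; simpl; auto.
  rewrite (partial_ext U (iter_partial l f) (fun _ => RtoC 0) i q HU IH Hq).
  destruct i; unfold partial, Cderive; simpl; rewrite !Derive_const; reflexivity.
Qed.

Lemma Z_smooth U f : open U -> (forall q, U q -> f q = RtoC 0) -> smooth2 U f.
Proof.
  intros HU Hf l p Hp. split.
  - apply (continuous_ext_loc _ (fun _ => RtoC 0)).
    + generalize (HU p Hp). apply filter_imp. intros q Hq. symmetry. apply (Z_iter U f HU Hf l q Hq).
    + apply continuous_const.
  - intro i. apply (ex_partial_ext U (fun _ => RtoC 0)); auto.
    + intros q Hq. symmetry. apply (Z_iter U f HU Hf l q Hq).
    + destruct p as [x y]; destruct i; split; simpl; apply ex_derive_const.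
Qed.

Fixpoint repI1 (n : nat) : list idx :=
  match n with O => nil | S m => cons I1 (repI1 m) end.

Lemma lin_m (g1 g2 : R -> R) k1 k2 x d1 d2 : is_derive g1 x d1 -> is_derive g2 x d2 ->
  is_derive (fun t => k1 * g1 t - k2 * g2 t) x (k1 * d1 - k2 * d2).
Proof. intros H1 H2. apply (is_derive_minus (fun t => k1 * g1 t) (fun t => k2 * g2 t)); apply is_derive_scal; auto. Qed.
Lemma lin_p (g1 g2 : R -> R) k1 k2 x d1 d2 : is_derive g1 x d1 -> is_derive g2 x d2 ->
  is_derive (fun t => k1 * g1 t + k2 * g2 t) x (k1 * d1 + k2 * d2).
Proof. intros H1 H2. apply (is_derive_plus (fun t => k1 * g1 t) (fun t => k2 * g2 t)); apply is_derive_scal; auto. Qed.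

Lemma ex_is (g : R -> R) x : ex_derive g x -> is_derive g x (Derive g x).
Proof. intro H. apply Derive_correct. exact H. Qed.

Lemma vd0 v x : vd v 0 x = v x.
Proof. unfold vd; simpl. destruct (v x); reflexivity. Qed.

Lemma VS_loc U f v K : open U -> smooth2 U f ->
  (forall x y, U (x,y) -> v x = Cmult (K y) (f (x,y))) ->
  forall n x y, U (x,y) -> vd v n x = Cmult (K y) (iter_partial (repI1 n) f (x,y)).
Proof.
  intros HU Hs Hv n. induction n as [|n IH]; intros x y Hxy.
  - rewrite vd0. simpl. apply Hv; auto.
  - set (G := iter_partial (repI1 n) f).
    destruct (Hs (repI1 n) (x,y) Hxy) as [_ HG]. destruct (HG I1) as [G1 G2]. simpl in G1, G2.
    fold G in G1, G2.
    change (iter_partial (repI1 (S n)) f) with (partial I1 G).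
    destruct (K y) as [k1 k2] eqn:EK.
    unfold vd. cbn [Derive_n]. unfold partial, Cderive, Cmult. cbn [fst snd]. f_equal.
    + rewrite (Derive_ext_loc _ (fun t => k1 * fst (G (t,y)) - k2 * snd (G (t,y)))).
      * apply is_derive_unique. apply lin_m; apply ex_is; auto.
      * generalize (loc1 U x y HU Hxy). apply filter_imp. intros t Ht.
        generalize (f_equal fst (IH t y Ht)). unfold vd. cbn [fst]. intro E. rewrite E.
        fold G. rewrite EK. reflexivity.
    + rewrite (Derive_ext_loc _ (fun t => k1 * snd (G (t,y)) + k2 * fst (G (t,y)))).
      * apply is_derive_unique. apply lin_p; apply ex_is; auto.
      * generalize (loc1 U x y HU Hxy). apply filter_imp. intros t Ht.
        generalize (f_equal snd (IH t y Ht)). unfold vd. cbn [snd]. intro E. rewrite E.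
        fold G. rewrite EK. reflexivity.
Qed.

Lemma VS U f v K : open U -> smooth2 U f ->
  (forall x y, U (x,y) -> v x = Cmult (K y) (f (x,y))) ->
  smooth1C (proj1U U) v.
Proof.
  intros HU Hs Hv. 
  assert (L := VS_loc U f v K HU Hs Hv).
  split; intros n x [y Hxy];
    set (G := iter_partial (repI1 n) f);
    destruct (Hs (repI1 n) (x,y) Hxy) as [_ HG]; destruct (HG I1) as [G1 G2]; simpl in G1, G2;
    fold G in G1, G2;
    destruct (K y) as [k1 k2] eqn:EK.
  - apply (ex_derive_ext_loc (fun t => k1 * fst (G (t,y)) - k2 * snd (G (t,y)))).
    + generalize (loc1 U x y HU Hxy). apply filter_imp. intros t Ht.
      generalize (f_equal fst (L n t y Ht)). unfold vd. cbn [fst]. intro E. rewrite E.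
      fold G. rewrite EK. reflexivity.
    + eexists. apply lin_m; apply ex_is; eauto.
  - apply (ex_derive_ext_loc (fun t => k1 * snd (G (t,y)) + k2 * fst (G (t,y)))).
    + generalize (loc1 U x y HU Hxy). apply filter_imp. intros t Ht.
      generalize (f_equal snd (L n t y Ht)). unfold vd. cbn [snd]. intro E. rewrite E.
      fold G. rewrite EK. reflexivity.
    + eexists. apply lin_p; apply ex_is; eauto.
Qed.

Definition Qk (Gam : idx -> idx -> idx -> R -> R) (al : C) (v : R -> C) (x : R) (i j k : idx) : C :=
  let G := fun a b c => RtoC (Gam a b c x) in
  let V0 := vd v 0 x in let V1 := vd v 1 x in let V2 := vd v 2 x in
  match k, i, j with
  | I1, I1, I1 => Cmult (Cplus (G I1 I2 I1) (G I2 I1 I1)) V1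
  | I1, I1, I2 => Cplus (Cmult (Cmult (G I1 I2 I1) al) V0) (Cmult (G I2 I2 I1) V1)
  | I1, I2, I1 => Cplus (Cmult (G I2 I2 I1) V1) (Cmult (Cmult (G I2 I1 I1) al) V0)
  | I1, I2, I2 => Cmult (Cmult (Cmult (RtoC 2) (G I2 I2 I1)) al) V0
  | I2, I1, I1 => Cplus (Cminus (Cminus V2 (Cmult (G I1 I1 I1) V1)) (Cmult (Cmult (G I1 I1 I2) al) V0))
                        (Cmult (Cplus (G I1 I2 I2) (G I2 I1 I2)) V1)
  | I2, I1, I2 => Cplus (Cminus (Cmult al V1) (Cmult (G I1 I2 I1) V1)) (Cmult (G I2 I2 I2) V1)
  | I2, I2, I1 => Cplus (Cminus (Cmult al V1) (Cmult (G I2 I1 I1) V1)) (Cmult (G I2 I2 I2) V1)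
  | I2, I2, I2 => Cplus (Cminus (Cmult (Cmult al al) V0) (Cmult (G I2 I2 I1) V1)) (Cmult (Cmult (G I2 I2 I2) al) V0)
  end.

Lemma PG2 Gam i j k p : partial I2 (GamC Gam i j k) p = RtoC 0.
Proof. destruct p. unfold partial, Cderive, GamC. simpl. rewrite !Derive_const. reflexivity. Qed.

Lemma KX U Gam al v (X : idx -> R * R -> C) : open U -> smooth1C (proj1U U) v ->
  (forall q, U q -> X I1 q = RtoC 0) ->
  (forall q, U q -> X I2 q = Fm al v 0 0 q) ->
  forall p, U p -> forall i j k,
  (Killing_eq Gam X p i j k <->
   Cmult (Cexp (Cmult al (RtoC (snd p)))) (Qk Gam al v (fst p) i j k) = RtoC 0).
Proof.
  intros HU Hv H1 H2 [x y] Hp.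
  assert (Z := Z_iter U (X I1) HU H1).
  assert (P := PF U al v (X I2) HU Hv H2).
  assert (Z2 : forall i j, partial i (partial j (X I1)) (x,y) = RtoC 0) by (intros; apply (Z (cons i (cons j nil))); auto).
  assert (Z1 : forall i, partial i (X I1) (x,y) = RtoC 0) by (intros; apply (Z (cons i nil)); auto).
  assert (P2 : forall i j, partial i (partial j (X I2)) (x,y) = Fm al v (cnt1 (cons i (cons j nil))) (cnt2 (cons i (cons j nil))) (x,y))
    by (intros; apply (P (cons i (cons j nil))); auto).
  assert (P1 : forall i, partial i (X I2) (x,y) = Fm al v (cnt1 (cons i nil)) (cnt2 (cons i nil)) (x,y))
    by (intros; apply (P (cons i nil)); auto).
  intros i j k. unfold Killing_eq, sum_idx.
  destruct i, j, k;
  rewrite ?Z2, ?P2, ?Z1, ?P1, ?H1, ?H2, ?PG2 by auto;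
  unfold GamC, Fm, Qk; cbn [cnt1 cnt2 Cpow]; match goal with |- ?L = _ <-> ?R = _ => replace L with R; [tauto|] end; cbn [fst snd]; ring.
Qed.

From Stdlib Require Import Classical.

Lemma ballR x e z : ball x e z -> Rabs (z - x) < e.
Proof. intro H. exact H. Qed.

Lemma I_interval U : open U -> connected2 U ->
  forall a b c, proj1U U a -> proj1U U b -> a <= c <= b -> proj1U U c.
Proof.
  intros HU HC a b c Ha Hb Hc.
  destruct (classic (proj1U U c)) as [H|H]; auto. exfalso.
  destruct Ha as [ya Ha]. destruct Hb as [yb Hb].
  assert (Hac : a <> c) by (intro E; subst; apply H; exists ya; auto).
  assert (Hbc : b <> c) by (intro E; subst; apply H; exists yb; auto).
  destruct (HC (fun q => fst q < c) (fun q => c < fst q)) as [HA|HB].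
  - intros [qx qy] Hq. simpl in Hq. assert (Hp : 0 < c - qx) by lra.
    exists (mkposreal _ Hp). intros [zx zy] [Hz _]. apply ballR in Hz. simpl in Hz |- *.
    apply Rabs_def2 in Hz as [Hz1 Hz2]. lra.
  - intros [qx qy] Hq. simpl in Hq. assert (Hp : 0 < qx - c) by lra.
    exists (mkposreal _ Hp). intros [zx zy] [Hz _]. apply ballR in Hz. simpl in Hz |- *.
    apply Rabs_def2 in Hz as [Hz1 Hz2]. lra.
  - intros [x y] Hq. simpl. destruct (Rtotal_order x c) as [E|[E|E]]; auto.
    subst. exfalso. apply H. exists y; auto.
  - intros [qx qy] _ H1 H2. simpl in *. lra.
  - specialize (HA _ Hb). simpl in HA. lra.
  - specialize (HB _ Ha). simpl in HB. lra.
Qed.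

Lemma I_open U x : open U -> proj1U U x -> locally x (proj1U U).
Proof. intros HU [y Hy]. generalize (loc1 U x y HU Hy). apply filter_imp. intros t Ht. exists y; auto. Qed.

Definition isI (I : R -> Prop) :=
  (forall x, I x -> locally x I) /\ (forall a b c, I a -> I b -> a <= c <= b -> I c).

Lemma isI_mm I a b x : isI I -> I a -> I b -> Rmin a b <= x <= Rmax a b -> I x.
Proof.
  intros [_ HI] Ha Hb Hx. destruct (Rle_dec a b).
  - rewrite Rmin_left, Rmax_right in Hx by lra. apply (HI a b); auto.
  - rewrite Rmin_right, Rmax_left in Hx by lra. apply (HI b a); auto.
Qed.

Lemma const_I I h : isI I -> (forall x, I x -> is_derive h x 0) ->
  forall a b, I a -> I b -> h a = h b.
Proof.
  intros HI Hd a b Ha Hb.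
  destruct (MVT_gen h a b (fun _ => 0)) as [c [_ Hc]].
  - intros x Hx. apply Hd. apply (isI_mm I a b); auto. lra.
  - intros x Hx. apply continuity_pt_filterlim.
    apply (ex_derive_continuous (K:=R_AbsRing) (V:=R_NormedModule)).
    exists 0. apply Hd. apply (isI_mm I a b); auto.
  - lra.
Qed.

Lemma ode_uniq I g y x0 : isI I -> (forall x, I x -> continuous g x) ->
  (forall x, I x -> is_derive y x (- g x * y x)) -> I x0 -> y x0 = 0 ->
  forall x, I x -> y x = 0.
Proof.
  intros HI Hg Hy Hx0 Hy0.
  set (G := fun x => RInt g x0 x).
  assert (HG : forall x, I x -> is_derive G x (g x)).
  { intros x Hx. apply (is_derive_RInt (V:=R_NormedModule) g G x0 x); [| apply Hg; auto].
    generalize (proj1 HI x Hx). apply filter_imp. intros b Hb.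
    apply (RInt_correct (V:=R_CompleteNormedModule)). apply (ex_RInt_continuous (V:=R_CompleteNormedModule)).
    intros z Hz. apply Hg. apply (isI_mm I x0 b); auto. }
  set (h := fun x => y x * exp (G x)).
  assert (Hh : forall x, I x -> is_derive h x 0).
  { intros x Hx.
    assert (D1 := is_derive_comp exp G x (exp (G x)) (g x) (is_derive_exp _) (HG x Hx)).
    assert (D2 := is_derive_mult (K:=R_AbsRing) y (fun x => exp (G x)) x _ _ (Hy x Hx) D1 ltac:(intros; apply Rmult_comm)).
    replace 0 with (plus (mult (- g x * y x) (exp (G x))) (mult (y x) (scal (g x) (exp (G x))))).
    - exact D2.
    - unfold plus, mult, scal; simpl. unfold mult; simpl. ring. }
  intros x Hx.
  assert (E := const_I I h HI Hh x x0 Hx Hx0). unfold h in E. rewrite Hy0 in E.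
  assert (Hp : exp (G x) > 0) by apply exp_pos. nra.
Qed.

Lemma Cexp0 y : Cexp (Cmult (RtoC 0) (RtoC y)) = RtoC 1.
Proof.
  unfold Cexp, Cmult, RtoC. simpl. replace (0 * y - 0 * 0) with 0 by ring.
  replace (0 * 0 + 0 * y) with 0 by ring. rewrite exp_0, cos_0, sin_0. f_equal; ring.
Qed.

Lemma Cmult_cancel_l z w : Cmult w z = RtoC 0 -> w <> RtoC 0 -> z = RtoC 0.
Proof. intros H Hw. apply (Cmult_cancel_r z w); auto. rewrite <- H. ring. Qed.

Lemma Ceq_opp a (al : C) : Cplus al (RtoC a) = RtoC 0 -> RtoC a = Copp al.
Proof. intro E. transitivity (Cminus (Cplus al (RtoC a)) al); [ring | rewrite E; ring]. Qed.

Lemma Rcancel r w : Cmult (RtoC r) w = RtoC 0 -> w <> RtoC 0 -> r = 0.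
Proof. intros H Hw. apply RtoC_inj0. apply (Cmult_cancel_r _ w); auto. Qed.

Lemma isI_U U : open U -> connected2 U -> isI (proj1U U).
Proof. intros HU HC. split; [intros; apply I_open; auto | apply I_interval; auto]. Qed.

Lemma Kal_Q U Gam al X v : open U -> KC U Gam X ->
  (forall p, U p -> X I1 p = RtoC 0 /\ X I2 p = Cmult (Cexp (Cmult al (RtoC (snd p)))) (v (fst p))) ->
  smooth1C (proj1U U) v /\
  (forall x, proj1U U x -> forall i j k, Qk Gam al v x i j k = RtoC 0).
Proof.
  intros HU [Hsm HK] Hv.
  assert (Hvs : smooth1C (proj1U U) v).
  { apply (VS U (X I2) v (fun y => Cinv (Cexp (Cmult al (RtoC y))))); auto.
    intros x y Hxy. destruct (Hv _ Hxy) as [_ E]. rewrite E. simpl. field. apply Cexp_nz. }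
  split; auto.
  intros x [y Hxy] i j k.
  assert (H := proj1 (KX U Gam al v X HU Hvs (fun q Hq => proj1 (Hv q Hq))
             (fun q Hq => eq_trans (proj2 (Hv q Hq)) (eq_sym (Fm00 al v q))) (x,y) Hxy i j k)
             (HK _ Hxy i j k)).
  simpl in H. apply Cmult_cancel_l in H; auto. apply Cexp_nz.
Qed.

Lemma gcont (I : R -> Prop) Gam : (forall i j k, smooth1 I (Gam i j k)) ->
  forall x, I x -> continuous (fun t => Gam I1 I2 I2 t + Gam I2 I1 I2 t) x.
Proof.
  intros HG x Hx.
  apply (ex_derive_continuous (K:=R_AbsRing) (V:=R_NormedModule)).
  apply (ex_derive_plus (Gam I1 I2 I2) (Gam I2 I1 I2)).
  - exact (HG I1 I2 I2 O x Hx).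
  - exact (HG I2 I1 I2 O x Hx).
Qed.

Lemma ode_v I Gam al v : isI I -> smooth1C I v ->
  (forall x, I x -> Gam I1 I1 I1 x = 0 /\ Gam I1 I1 I2 x = 0) ->
  (forall x, I x -> Qk Gam al v x I1 I1 I2 = RtoC 0) ->
  forall x, I x ->
    is_derive (Derive_n (fun s => fst (v s)) 1) x
       (- (Gam I1 I2 I2 x + Gam I2 I1 I2 x) * Derive_n (fun s => fst (v s)) 1 x) /\
    is_derive (Derive_n (fun s => snd (v s)) 1) x
       (- (Gam I1 I2 I2 x + Gam I2 I1 I2 x) * Derive_n (fun s => snd (v s)) 1 x).
Proof.
  intros HI [S1 S2] H11 HQ x Hx. destruct (H11 x Hx) as [Ga Gb].
  assert (Q := HQ x Hx). unfold Qk, vd in Q. rewrite Ga, Gb in Q.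
  split.
  - replace (- (Gam I1 I2 I2 x + Gam I2 I1 I2 x) * Derive_n (fun s => fst (v s)) 1 x)
      with (Derive_n (fun s => fst (v s)) 2 x).
    + apply ex_is. apply S1; auto.
    + apply (f_equal fst) in Q. unfold Cminus in Q; unfold Cplus, Cmult, Copp, RtoC in Q; cbn [fst snd] in Q. nra.
  - replace (- (Gam I1 I2 I2 x + Gam I2 I1 I2 x) * Derive_n (fun s => snd (v s)) 1 x)
      with (Derive_n (fun s => snd (v s)) 2 x).
    + apply ex_is. apply S2; auto.
    + apply (f_equal snd) in Q. unfold Cminus in Q; unfold Cplus, Cmult, Copp, RtoC in Q; cbn [fst snd] in Q. nra.
Qed.

Lemma V1_nz I Gam al v x0 : isI I -> (forall i j k, smooth1 I (Gam i j k)) -> smooth1C I v ->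
  (forall x, I x -> Gam I1 I1 I1 x = 0 /\ Gam I1 I1 I2 x = 0) ->
  (forall x, I x -> Qk Gam al v x I1 I1 I2 = RtoC 0) ->
  I x0 -> vd v 1 x0 <> RtoC 0 -> forall x, I x -> vd v 1 x <> RtoC 0.
Proof.
  intros HI HG Hv H11 HQ Hx0 Hnz x Hx E. apply Hnz.
  assert (D := ode_v I Gam al v HI Hv H11 HQ).
  unfold vd, RtoC in E |- *. injection E as E1 E2.
  f_equal.
  - apply (ode_uniq I (fun t => Gam I1 I2 I2 t + Gam I2 I1 I2 t) _ x HI (gcont I Gam HG)); auto.
    intros t Ht. apply (D t Ht).
  - apply (ode_uniq I (fun t => Gam I1 I2 I2 t + Gam I2 I1 I2 t) _ x HI (gcont I Gam HG)); auto.
    intros t Ht. apply (D t Ht).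
Qed.

Ltac qk H := cbv beta iota zeta delta [Qk] in H.

Lemma part1 U Gam (HUopen : open U) (HUconn : connected2 U)
  (HGsmooth : forall i j k, smooth1 (proj1U U) (Gam i j k))
  (H111 : forall x, proj1U U x -> Gam I1 I1 I1 x = 0%R)
  (H112 : forall x, proj1U U x -> Gam I1 I1 I2 x = 0%R) :
  forall (alpha : C) (X : idx -> R * R -> C),
      K_alpha U Gam alpha X ->
      ~ (exists c : C, forall p, U p -> X I1 p = RtoC 0 /\ X I2 p = c) ->
      star U Gam alpha.
Proof.
  intros al X [HKC [v Hv]] HNC.
  destruct (Kal_Q U Gam al X v HUopen HKC Hv) as [Hvs HQ].
  assert (HI := isI_U U HUopen HUconn).
  assert (H11 : forall x, proj1U U x -> Gam I1 I1 I1 x = 0 /\ Gam I1 I1 I2 x = 0) by auto.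
  intros x Hx. split; [auto|]. split; [auto|].
  assert (Q111 := HQ x Hx I1 I1 I1). qk Q111.
  assert (Q121 := HQ x Hx I1 I2 I1). qk Q121.
  assert (Q211 := HQ x Hx I2 I1 I1). qk Q211.
  assert (Q221 := HQ x Hx I2 I2 I1). qk Q221.
  assert (Q122 := HQ x Hx I1 I2 I2). qk Q122.
  assert (Q212 := HQ x Hx I2 I1 I2). qk Q212.
  assert (Q222 := HQ x Hx I2 I2 I2). qk Q222.
  destruct (classic (exists x0, proj1U U x0 /\ vd v 1 x0 <> RtoC 0)) as [[x0 [Hx0 Hnz]] | Hn].
  - assert (V1 := V1_nz (proj1U U) Gam al v x0 HI HGsmooth Hvs H11 (fun t Ht => HQ t Ht I1 I1 I2) Hx0 Hnz x Hx).
    apply Cmult_cancel_r in Q111; auto.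
    assert (E1 : Cmult (Cplus (Cminus al (RtoC (Gam I1 I2 I1 x))) (RtoC (Gam I2 I2 I2 x))) (vd v 1 x) = RtoC 0)
      by (rewrite <- Q122; ring).
    assert (E2 : Cmult (Cplus (Cminus al (RtoC (Gam I2 I1 I1 x))) (RtoC (Gam I2 I2 I2 x))) (vd v 1 x) = RtoC 0)
      by (rewrite <- Q212; ring).
    apply Cmult_cancel_r in E1; auto. apply Cmult_cancel_r in E2; auto.
    destruct al as [a b].
    assert (F1 := f_equal fst Q111). assert (F2 := f_equal fst E1). assert (F3 := f_equal fst E2).
    assert (F4 := f_equal snd E1).
    unfold Cminus, Cplus, Copp, RtoC in F1, F2, F3, F4. cbn [fst snd] in F1, F2, F3, F4.
    assert (G1 : Gam I1 I2 I1 x = 0) by lra.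
    assert (G2 : Gam I2 I1 I1 x = 0) by lra.
    rewrite G1 in Q121.
    assert (E3 : Cmult (RtoC (Gam I2 I2 I1 x)) (vd v 1 x) = RtoC 0) by (rewrite <- Q121; ring).
    apply Rcancel in E3; auto.
    repeat split; auto. unfold RtoC, Copp. cbn [fst snd]. f_equal; lra.
  - assert (Hz : forall t, proj1U U t -> vd v 1 t = RtoC 0).
    { intros t Ht. apply NNPP. intro N. apply Hn. exists t. auto. }
    destruct Hvs as [S1 S2].
    assert (Hc : forall t, proj1U U t -> vd v 0 t = vd v 0 x).
    { intros t Ht. unfold vd. cbn [Derive_n]. f_equal.
      - apply (const_I (proj1U U) (fun s => fst (v s)) HI); auto.
        intros s Hs. replace 0 with (Derive (fun s => fst (v s)) s).
        + apply ex_is. exact (S1 O s Hs).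
        + exact (f_equal fst (Hz s Hs)).
      - apply (const_I (proj1U U) (fun s => snd (v s)) HI); auto.
        intros s Hs. replace 0 with (Derive (fun s => snd (v s)) s).
        + apply ex_is. exact (S2 O s Hs).
        + exact (f_equal snd (Hz s Hs)). }
    set (c := vd v 0 x) in *.
    assert (Hvc : forall p, U p -> v (fst p) = c).
    { intros [t s] Hp. rewrite <- vd0. apply Hc. exists s; auto. }
    assert (Ha : al <> RtoC 0).
    { intro Ha. apply HNC. exists c. intros p Hp. destruct (Hv p Hp) as [A B]; split; auto.
      rewrite B, Ha, Cexp0, Hvc; auto. ring. }
    assert (Hc0 : c <> RtoC 0).
    { intro Hc0. apply HNC. exists (RtoC 0). intros p Hp. destruct (Hv p Hp) as [A B]; split; auto.
      rewrite B, Hvc, Hc0; auto. ring. }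
    assert (Hac : Cmult al c <> RtoC 0) by (apply Cmult_neq_0; auto).
    rewrite (Hz x Hx) in Q121, Q211, Q222.
    assert (E1 : Cmult (RtoC (Gam I2 I2 I1 x)) (Cmult (Cmult (RtoC 2) al) c) = RtoC 0) by (rewrite <- Q221; ring).
    apply Rcancel in E1; [| apply Cmult_neq_0; auto; apply Cmult_neq_0; auto; intro H2; apply RtoC_inj0 in H2; lra].
    assert (E2 : Cmult (RtoC (Gam I1 I2 I1 x)) (Cmult al c) = RtoC 0) by (rewrite <- Q121; ring).
    apply Rcancel in E2; auto.
    assert (E3 : Cmult (RtoC (Gam I2 I1 I1 x)) (Cmult al c) = RtoC 0) by (rewrite <- Q211; ring).
    apply Rcancel in E3; auto.
    assert (E4 : Cmult (Cplus al (RtoC (Gam I2 I2 I2 x))) (Cmult al c) = RtoC 0) by (rewrite <- Q222; ring).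
    apply Cmult_cancel_r in E4; auto.
    repeat split; auto. apply Ceq_opp; auto.
Qed.

Lemma PG1z U Gam i j k x y : open U -> U (x,y) ->
  (forall t, proj1U U t -> Gam i j k t = 0) ->
  partial I1 (GamC Gam i j k) (x,y) = RtoC 0.
Proof.
  intros HU Hp HZ. unfold partial, Cderive, GamC. simpl. rewrite Derive_const.
  rewrite (Derive_ext_loc _ (fun _ => 0)). { rewrite Derive_const; reflexivity. }
  generalize (I_open U x HU (ex_intro _ y Hp)). apply filter_imp. intros t Ht. auto.
Qed.

Lemma part2a U Gam (HUopen : open U) (al : C) :
  (forall x, proj1U U x -> Gam I1 I1 I1 x = 0) ->
  (forall x, proj1U U x -> Gam I1 I1 I2 x = 0) ->
  star U Gam al ->
  (forall u w : R * R -> C, KC U Gam (vf u w) ->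
        forall p, U p ->
          Cplus (Cmult al (partial I2 u p)) (partial I2 (partial I2 u) p)
            = RtoC 0 /\
          Cplus (Cmult (RtoC (Gam I1 I2 I2 (fst p) + Gam I2 I1 I2 (fst p)))
                       (partial I1 w p))
                (partial I1 (partial I1 w) p) = RtoC 0).
Proof.
  intros H111 H112 Hst u w [_ HK] [x y] Hp.
  assert (Hx : proj1U U x) by (exists y; auto).
  destruct (Hst x Hx) as [G111 [G112 [G121 [G211 [G221 G222]]]]].
  assert (Z221 : partial I1 (GamC Gam I2 I2 I1) (x,y) = RtoC 0).
  { apply (PG1z U); auto. intros t Ht. apply (Hst t Ht). }
  assert (Z112 : partial I1 (GamC Gam I1 I1 I2) (x,y) = RtoC 0).
  { apply (PG1z U); auto. }
  split.
  - assert (K := HK _ Hp I2 I2 I1). unfold Killing_eq, sum_idx, GamC in K. cbn [vf fst snd] in K |- *.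
    fold (GamC Gam I2 I2 I1) in K.
    rewrite Z221, PG2 in K. rewrite G222, G121, G211, G221 in K.
    rewrite <- K. ring.
  - assert (K := HK _ Hp I1 I1 I2). unfold Killing_eq, sum_idx, GamC in K. cbn [vf fst snd] in K |- *.
    fold (GamC Gam I1 I1 I2) in K.
    rewrite Z112, PG2 in K. rewrite G111, G112 in K.
    rewrite <- K. rewrite RtoC_plus. ring.
Qed.

Lemma part2b U Gam (HUopen : open U) (HUconn : connected2 U) (al : C) :
  (forall x, proj1U U x -> Gam I1 I1 I1 x = 0) ->
  (forall x, proj1U U x -> Gam I1 I1 I2 x = 0) ->
  star U Gam al ->
     (forall X : idx -> R * R -> C,
        K_alpha U Gam al X <->
        exists v : R -> C,
          smooth1C (proj1U U) v /\
          (forall x, proj1U U x ->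
             Cplus (Cmult (RtoC (Gam I1 I2 I2 x + Gam I2 I1 I2 x))
                          (Cderive v x))
                   (Cderive (Cderive v) x) = RtoC 0) /\
          (forall p, U p ->
             X I1 p = RtoC 0 /\
             X I2 p = Cmult (Cexp (Cmult al (RtoC (snd p)))) (v (fst p)))).
Proof.
  intros H111 H112 Hst X. split.
  - intros [HKC [v Hv]].
    destruct (Kal_Q U Gam al X v HUopen HKC Hv) as [Hvs HQ].
    exists v. split; [|split]; auto.
    intros x Hx. assert (Q := HQ x Hx I1 I1 I2). qk Q.
    change (Cderive v x) with (vd v 1 x). change (Cderive (Cderive v) x) with (vd v 2 x).
    rewrite H111, H112 in Q by auto. rewrite RtoC_plus.
    transitivity (Cplus (Cminus (Cminus (vd v 2 x) (Cmult (RtoC 0) (vd v 1 x))) (Cmult (Cmult (RtoC 0) al) (vd v 0 x)))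
        (Cmult (Cplus (RtoC (Gam I1 I2 I2 x)) (RtoC (Gam I2 I1 I2 x))) (vd v 1 x))); [ring | exact Q].
  - intros [v [Hvs [Hode Hv]]].
    assert (H1 : forall q, U q -> X I1 q = RtoC 0) by (intros; apply Hv; auto).
    assert (H2 : forall q, U q -> X I2 q = Fm al v 0 0 q) by (intros; rewrite Fm00; apply Hv; auto).
    split; [|exists v; auto].
    split.
    + intros [|]. { apply Z_smooth; auto. } { apply (PF_smooth U al v); auto. }
    + intros p Hp i j k. apply (KX U Gam al v X HUopen Hvs H1 H2 p Hp).
      destruct p as [x y]. cbn [fst snd].
      assert (Hx : proj1U U x) by (exists y; auto).
      destruct (Hst x Hx) as [G111 [G112 [G121 [G211 [G221 G222]]]]].
      assert (O := Hode x Hx).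
      change (Cderive v x) with (vd v 1 x) in O. change (Cderive (Cderive v) x) with (vd v 2 x) in O.
      rewrite RtoC_plus in O.
      cut (Qk Gam al v x i j k = RtoC 0). { intro E; rewrite E; ring. }
      destruct i, j, k; cbv beta iota zeta delta [Qk]; rewrite ?G111, ?G112, ?G121, ?G211, ?G221, ?G222.
      all: try ring.
      transitivity (Cplus (Cmult (Cplus (RtoC (Gam I1 I2 I2 x)) (RtoC (Gam I2 I1 I2 x))) (vd v 1 x)) (vd v 2 x));
        [ring | exact O].
Qed.

Definition is_Cderive (f : R -> C) (t : R) (l : C) : Prop :=
  is_derive (fun s => fst (f s)) t (fst l) /\ is_derive (fun s => snd (f s)) t (snd l).

Lemma Cderive_eq f t l : is_Cderive f t l -> Cderive f t = l.
Proof.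
  intros [H1 H2]. unfold Cderive. apply injective_projections; cbn [fst snd]; apply is_derive_unique; auto.
Qed.

Lemma Csum_is_Cderive N (f d : nat -> R -> C) (c : nat -> R) t :
  (forall n, (n < N)%nat -> is_Cderive (f n) t (d n t)) ->
  is_Cderive (fun s => Csum N (fun n => Cmult (f n s) (RtoC (c n)))) t
             (Csum N (fun n => Cmult (d n t) (RtoC (c n)))).
Proof.
  induction N as [|N IH]; intros Hf.
  - split; simpl; apply (is_derive_const (K:=R_AbsRing) (V:=R_NormedModule)).
  - destruct IH as [I1' I2']. { intros n Hn. apply Hf. lia. }
    destruct (Hf N ltac:(lia)) as [F1 F2].
    split; cbn [Csum].
    + apply (is_derive_ext (fun s => fst (Csum N (fun n => Cmult (f n s) (RtoC (c n)))) + (c N * fst (f N s) - 0 * snd (f N s)))).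
      { intro s. unfold Cplus, Cmult, RtoC. cbn [fst snd]. match goal with |- ?a = ?b => change (@eq R a b) end; ring. }
      replace (fst (Cplus (Csum N (fun n => Cmult (d n t) (RtoC (c n)))) (Cmult (d N t) (RtoC (c N)))))
        with (fst (Csum N (fun n => Cmult (d n t) (RtoC (c n)))) + (c N * fst (d N t) - 0 * snd (d N t)))
        by (unfold Cplus, Cmult, RtoC; cbn [fst snd]; ring).
      apply (is_derive_plus (K:=R_AbsRing) (V:=R_NormedModule)); auto.
      apply lin_m; auto.
    + apply (is_derive_ext (fun s => snd (Csum N (fun n => Cmult (f n s) (RtoC (c n)))) + (c N * snd (f N s) + 0 * fst (f N s)))).
      { intro s. unfold Cplus, Cmult, RtoC. cbn [fst snd]. match goal with |- ?a = ?b => change (@eq R a b) end; ring. }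
      replace (snd (Cplus (Csum N (fun n => Cmult (d n t) (RtoC (c n)))) (Cmult (d N t) (RtoC (c N)))))
        with (snd (Csum N (fun n => Cmult (d n t) (RtoC (c n)))) + (c N * snd (d N t) + 0 * fst (d N t)))
        by (unfold Cplus, Cmult, RtoC; cbn [fst snd]; ring).
      apply (is_derive_plus (K:=R_AbsRing) (V:=R_NormedModule)); auto.
      apply lin_p; auto.
Qed.

Fixpoint rsum (N : nat) (f : nat -> R) : R :=
  match N with O => 0 | S m => rsum m f + f m end.

Lemma rsum_pderiv N (c : nat -> R) y :
  is_derive (fun y => rsum (S N) (fun n => c n * y ^ n)) y
            (rsum N (fun n => INR (S n) * c (S n) * y ^ n)).
Proof.
  induction N as [|N IH].
  - simpl. apply (is_derive_ext (fun _ => c O)).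
    { intro t. simpl. ring. }
    apply (is_derive_const (K:=R_AbsRing) (V:=R_NormedModule)).
  - apply (is_derive_ext (fun y => rsum (S N) (fun n => c n * y ^ n) + c (S N) * y ^ (S N))).
    { intro t. reflexivity. }
    replace (rsum (S N) (fun n => INR (S n) * c (S n) * y ^ n))
      with (rsum N (fun n => INR (S n) * c (S n) * y ^ n) + c (S N) * (INR (S N) * 1 * y ^ Nat.pred (S N)))
      by (simpl; ring).
    apply (is_derive_plus (K:=R_AbsRing) (V:=R_NormedModule)); auto.
    apply is_derive_scal. apply is_derive_pow. apply (is_derive_id (K:=R_AbsRing)).
Qed.

Lemma rsum_c0 N (c : nat -> R) y : (forall n, (n < N)%nat -> c (S n) = 0) ->
  rsum (S N) (fun n => c n * y ^ n) = c O.
Proof.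
  induction N as [|N IH]; intro H.
  - simpl. ring.
  - change (rsum (S N) (fun n => c n * y ^ n) + c (S N) * y ^ (S N) = c O).
    rewrite IH by (intros; apply H; lia). rewrite H by lia. ring.
Qed.

Lemma poly0 N : forall (c : nat -> R) y0,
  locally y0 (fun y => rsum N (fun n => c n * y ^ n) = 0) -> forall n, (n < N)%nat -> c n = 0.
Proof.
  induction N as [|N IH]; intros c y0 Hl n Hn; [lia|].
  assert (Hd : forall n, (n < N)%nat -> c (S n) = 0).
  { intros m Hm.
    assert (E := IH (fun n => INR (S n) * c (S n)) y0).
    assert (Z : INR (S m) * c (S m) = 0).
    { apply E; auto.
      generalize (locally_locally _ _ Hl). apply filter_imp. intros y Hy.
      rewrite <- (is_derive_unique _ _ _ (rsum_pderiv N c y)).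
      rewrite (Derive_ext_loc _ (fun _ => 0)) by exact Hy.
      apply Derive_const. }
    assert (INR (S m) <> 0) by (apply not_0_INR; lia).
    apply Rmult_integral in Z. destruct Z; [contradiction|auto]. }
  destruct n as [|m].
  - rewrite <- (rsum_c0 N c y0 Hd). apply (locally_singleton _ _ Hl).
  - apply Hd. lia.
Qed.

Lemma Csum_fst N (q : nat -> C) y : fst (Csum N (fun n => Cmult (q n) (RtoC (y ^ n)))) = rsum N (fun n => fst (q n) * y ^ n).
Proof. induction N as [|N IH]; simpl; auto. rewrite IH. ring. Qed.
Lemma Csum_snd N (q : nat -> C) y : snd (Csum N (fun n => Cmult (q n) (RtoC (y ^ n)))) = rsum N (fun n => snd (q n) * y ^ n).
Proof. induction N as [|N IH]; simpl; auto. rewrite IH. ring. Qed.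

Lemma Csum_comb N g (a b : nat -> C) y :
  Cplus (Cmult g (Csum N (fun n => Cmult (a n) (RtoC (y ^ n))))) (Csum N (fun n => Cmult (b n) (RtoC (y ^ n))))
  = Csum N (fun n => Cmult (Cplus (Cmult g (a n)) (b n)) (RtoC (y ^ n))).
Proof. induction N as [|N IH]; simpl Csum. { ring. } rewrite <- IH. ring. Qed.

Lemma d1W N (f : nat -> R -> C) t s :
  (forall n, (n < N)%nat -> is_Cderive (f n) t (Cderive (f n) t)) ->
  partial I1 (fun p => Csum N (fun n => Cmult (f n (fst p)) (RtoC (snd p ^ n)))) (t,s)
  = Csum N (fun n => Cmult (Cderive (f n) t) (RtoC (s ^ n))).
Proof.
  intro H. unfold partial. cbn [fst snd]. apply Cderive_eq.
  apply (Csum_is_Cderive N f (fun n t => Cderive (f n) t) (fun n => s ^ n) t). auto.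
Qed.

Lemma ex_isC (f : R -> C) t : ex_derive (fun s => fst (f s)) t -> ex_derive (fun s => snd (f s)) t ->
  is_Cderive f t (Cderive f t).
Proof. intros H1 H2. split; apply ex_is; auto. Qed.

Lemma part2c1 U Gam (HUopen : open U) (HUconn : connected2 U) :
  (forall x, proj1U U x -> Gam I1 I1 I1 x = 0) ->
  (forall x, proj1U U x -> Gam I1 I1 I2 x = 0) ->
  star U Gam (RtoC 0) ->
  (forall (u : R * R -> C) (N : nat) (wn : nat -> R -> C),
           (forall n, (n < N)%nat -> smooth1C (proj1U U) (wn n)) ->
           KC U Gam (vf u (fun p => Csum N (fun n =>
                              Cmult (wn n (fst p)) (RtoC (snd p ^ n))))) ->
           forall n, (n < N)%nat ->
             K_alpha U Gam (RtoC 0)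
               (vf (fun _ => RtoC 0) (fun p => wn n (fst p)))).
Proof.
  intros H111 H112 Hst u N wn Hsm HKC n Hn.
  apply (proj2 (part2b U Gam HUopen HUconn (RtoC 0) H111 H112 Hst _)).
  exists (wn n). split; [auto|split].
  2:{ intros [x y] Hp. cbn [vf fst snd]. split; auto. rewrite Cexp0. ring. }
  intros x [y Hxy].
  set (W := fun p : R * R => Csum N (fun n => Cmult (wn n (fst p)) (RtoC (snd p ^ n)))).
  assert (A := part2a U Gam HUopen (RtoC 0) H111 H112 Hst u W HKC).
  set (g := RtoC (Gam I1 I2 I2 x + Gam I2 I1 I2 x)).
  assert (D0 : forall t, proj1U U t -> forall m, (m < N)%nat -> is_Cderive (wn m) t (Cderive (wn m) t)).
  { intros t Ht m Hm. destruct (Hsm m Hm) as [S1 S2]. apply ex_isC; [exact (S1 O t Ht) | exact (S2 O t Ht)]. }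
  assert (D1 : forall t, proj1U U t -> forall m, (m < N)%nat ->
              is_Cderive (fun s => Cderive (wn m) s) t (Cderive (fun s => Cderive (wn m) s) t)).
  { intros t Ht m Hm. destruct (Hsm m Hm) as [S1 S2]. apply ex_isC; [exact (S1 1%nat t Ht) | exact (S2 1%nat t Ht)]. }
  assert (L : locally y (fun s => Csum N (fun m => Cmult
              (Cplus (Cmult g (Cderive (wn m) x)) (Cderive (Cderive (wn m)) x)) (RtoC (s ^ m))) = RtoC 0)).
  { generalize (loc2 U x y HUopen Hxy). apply filter_imp. intros s Hs.
    destruct (A (x,s) Hs) as [_ B]. cbn [fst] in B. fold g in B.
    rewrite <- B. rewrite <- Csum_comb. f_equal.
    - f_equal. unfold W. rewrite d1W; auto. intros m Hm. apply D0; auto. exists y; auto.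
    - rewrite (partial_ext U (partial I1 W)
                 (fun p => Csum N (fun m => Cmult (Cderive (wn m) (fst p)) (RtoC (snd p ^ m)))) I1 (x,s) HUopen).
      + rewrite (d1W N (fun m => Cderive (wn m))). reflexivity.
        intros m Hm. apply D1; auto. exists y; auto.
      + intros [t r] Htr. unfold W. rewrite d1W; auto. intros m Hm. apply D0; auto. exists r; auto.
      + exact Hs. }
  assert (P1 := poly0 N (fun m => fst (Cplus (Cmult g (Cderive (wn m) x)) (Cderive (Cderive (wn m)) x))) y).
  assert (P2 := poly0 N (fun m => snd (Cplus (Cmult g (Cderive (wn m) x)) (Cderive (Cderive (wn m)) x))) y).
  apply injective_projections; cbn [fst snd RtoC].
  - apply P1; auto. generalize L. apply filter_imp. intros s Hs. rewrite <- Csum_fst, Hs. reflexivity.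
  - apply P2; auto. generalize L. apply filter_imp. intros s Hs. rewrite <- Csum_snd, Hs. reflexivity.
Qed.

Lemma pconst (c : C) i p : partial i (fun _ => c) p = RtoC 0.
Proof. destruct p; destruct i; unfold partial, Cderive; simpl; rewrite !Derive_const; reflexivity. Qed.

Lemma pY1 p : partial I1 (fun q => RtoC (snd q)) p = RtoC 0.
Proof. destruct p; unfold partial, Cderive; simpl; rewrite !Derive_const; reflexivity. Qed.

Lemma pY2 p : partial I2 (fun q => RtoC (snd q)) p = RtoC 1.
Proof. destruct p; unfold partial, Cderive; simpl. rewrite Derive_id, Derive_const; reflexivity. Qed.

Lemma iterY l : l <> nil -> exists c, forall q, iter_partial l (fun q => RtoC (snd q)) q = c.
Proof.
  induction l as [|i l IH]; intro H; [congruence|].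
  destruct l as [|j l'].
  - destruct i; [exists (RtoC 0); apply pY1 | exists (RtoC 1); apply pY2].
  - destruct IH as [c Hc]; [congruence|]. exists (RtoC 0). intro q. simpl.
    rewrite (partial_ext (fun _ => True) _ (fun _ => c)); auto.
    + apply pconst.
    + intros x _. exists (mkposreal 1 Rlt_0_1). auto.
    + intros q' _. apply Hc.
Qed.

Lemma part2c2 U Gam : open U -> star U Gam (RtoC 0) ->
  KR U Gam (vf (fun _ => RtoC 0) (fun p => RtoC (snd p))).
Proof.
  intros HU Hst. split; [split|].
  - intros [|]; cbn [vf].
    + apply Z_smooth; auto.
    + intros l p Hp. destruct l as [|i l].
      * split.
        -- simpl. apply (cont_pair (fun q => snd q) (fun _ => 0)).
           ++ destruct p. apply continuous_snd.
           ++ apply continuous_const.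
        -- intro i; destruct p; destruct i; split; simpl; first [apply ex_derive_const | apply ex_derive_id].
      * destruct (iterY (cons i l)) as [c Hc]; [congruence|]. split.
        -- apply (continuous_ext (fun _ => c)); [intro; symmetry; apply Hc | apply continuous_const].
        -- intro j. apply (ex_partial_ext (fun _ => True) (fun _ => c)); auto.
           ++ intros x _. exists (mkposreal 1 Rlt_0_1). auto.
           ++ destruct p; destruct j; split; simpl; apply ex_derive_const.
  - intros [x y] Hp i j k.
    assert (Hx : proj1U U x) by (exists y; auto).
    destruct (Hst x Hx) as [G111 [G112 [G121 [G211 [G221 G222]]]]].
    assert (PP : forall a b, partial a (partial b (fun q => RtoC (snd q))) (x,y) = RtoC 0).
    { intros a b. destruct (iterY (cons b nil)) as [c Hc]; [congruence|].
      rewrite (partial_ext (fun _ => True) _ (fun _ => c)); auto.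
      all: try apply pconst; try (intros q _; apply Hc); try (intros z _; exists (mkposreal 1 Rlt_0_1); auto). }
    assert (PP0 : forall a b, partial a (partial b (fun _ : R * R => RtoC 0)) (x,y) = RtoC 0).
    { intros a b. rewrite (partial_ext (fun _ => True) _ (fun _ => RtoC 0)); auto.
      all: try apply pconst; try (intros q _; apply pconst); try (intros z _; exists (mkposreal 1 Rlt_0_1); auto). }
    unfold Killing_eq, sum_idx.
    destruct i, j, k; cbn [vf]; rewrite ?PP0, ?PP, ?pconst, ?pY1, ?pY2, ?PG2; unfold GamC; cbn [fst snd];
      rewrite ?G111, ?G112, ?G121, ?G211, ?G221, ?G222; ring.
  - intros [|] p _; reflexivity.
Qed.

Theorem lemma3p2
  (U : R * R -> Prop) (Gam : idx -> idx -> idx -> R -> R)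
  (HUopen : open U) (HUconn : connected2 U)
  (HGsmooth : forall i j k, smooth1 (proj1U U) (Gam i j k))
  (H111 : forall x, proj1U U x -> Gam I1 I1 I1 x = 0%R)
  (H112 : forall x, proj1U U x -> Gam I1 I1 I2 x = 0%R) :
  (* (1) *)
  (forall (alpha : C) (X : idx -> R * R -> C),
      K_alpha U Gam alpha X ->
      ~ (exists c : C, forall p, U p -> X I1 p = RtoC 0 /\ X I2 p = c) ->
      star U Gam alpha)
  /\
  (* (2) *)
  (forall alpha : C, star U Gam alpha ->
     (* (a) *)
     (forall u w : R * R -> C, KC U Gam (vf u w) ->
        forall p, U p ->
          Cplus (Cmult alpha (partial I2 u p)) (partial I2 (partial I2 u) p)
            = RtoC 0 /\
          Cplus (Cmult (RtoC (Gam I1 I2 I2 (fst p) + Gam I2 I1 I2 (fst p)))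
                       (partial I1 w p))
                (partial I1 (partial I1 w) p) = RtoC 0)
     /\
     (* (b) *)
     (forall X : idx -> R * R -> C,
        K_alpha U Gam alpha X <->
        exists v : R -> C,
          smooth1C (proj1U U) v /\
          (forall x, proj1U U x ->
             Cplus (Cmult (RtoC (Gam I1 I2 I2 x + Gam I2 I1 I2 x))
                          (Cderive v x))
                   (Cderive (Cderive v) x) = RtoC 0) /\
          (forall p, U p ->
             X I1 p = RtoC 0 /\
             X I2 p = Cmult (Cexp (Cmult alpha (RtoC (snd p)))) (v (fst p))))
     /\
     (* (c) *)
     (alpha = RtoC 0 ->
        (forall (u : R * R -> C) (N : nat) (wn : nat -> R -> C),
           (forall n, (n < N)%nat -> smooth1C (proj1U U) (wn n)) ->
           KC U Gam (vf u (fun p => Csum N (fun n =>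
                              Cmult (wn n (fst p)) (RtoC (snd p ^ n))))) ->
           forall n, (n < N)%nat ->
             K_alpha U Gam (RtoC 0)
               (vf (fun _ => RtoC 0) (fun p => wn n (fst p))))
        /\
        KR U Gam (vf (fun _ => RtoC 0) (fun p => RtoC (snd p))))).
Proof.
  split.
  - exact (part1 U Gam HUopen HUconn HGsmooth H111 H112).
  - intros alpha Hst. split; [|split].
    + exact (part2a U Gam HUopen alpha H111 H112 Hst).
    + exact (part2b U Gam HUopen HUconn alpha H111 H112 Hst).
    + intros Ha. subst alpha. split.
      * exact (part2c1 U Gam HUopen HUconn H111 H112 Hst).
      * exact (part2c2 U Gam HUopen Hst).
Qed.
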